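(* For every $n\ge 3$, the wheel $W_n$ is H$_2$--cordial.
   Context: The wheel $W_n$ has vertex set $\{v_0,v_1,\dots,v_n\}$ and edges $v_0v_i$ for $1\le i\le n$ together with the cycle edges $v_iv_{i+1}$ for $1\le i\le n$ (with $v_{n+1}=v_1$). For a positive integer $k$, an H$_k$--cordial labeling of a graph $G$ is a map $f:E(G)\to\mathbb{Z}$ such that, defining $f(v)=\sum_{e\in I(v)} f(e)$ for each vertex $v$ (where $I(v)$ is the set of edges incident to $v$), we have $1\le |f(e)|\le k$ for every edge $e$, $1\le |f(v)|\le k$ for every vertex $v$, and for each $i$ with $1\le i\le k$, $|e_f(i)-e_f(-i)|\le 1$ and $|v_f(i)-v_f(-i)|\le 1$; here $e_f(c)$ is the number of edges with label $c$ and $v_f(c)$ the number of vertices $v$ with $f(v)=c$. A graph is H$_k$--cordial if it admits an H$_k$--cordial labeling. *)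

(* Defs.v *)
From mathcomp Require Import all_boot all_order all_algebra.
Set Implicit Arguments. Unset Strict Implicit. Unset Printing Implicit Defensive.
Import Order.TTheory GRing.Theory Num.Theory.
Local Open Scope ring_scope.

Section Cordial.
Variables (V E : finType) (ends : E -> V * V).

Definition incident (v : V) (e : E) : bool := ((ends e).1 == v) || ((ends e).2 == v).

Definition vlabel (f : E -> int) (v : V) : int := \sum_(e : E | incident v e) f e.

Definition e_count (f : E -> int) (c : int) : nat := #|[set e : E | f e == c]|.
Definition v_count (f : E -> int) (c : int) : nat := #|[set v : V | vlabel f v == c]|.

Definition Hk_cordial_labeling (k : nat) (f : E -> int) : Prop :=
  (forall e, 1 <= `|f e| <= k%:Z) /\
  (forall v, 1 <= `|vlabel f v| <= k%:Z) /\
  (forall i : nat, (1 <= i <= k)%N ->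
     `|(e_count f i%:Z)%:Z - (e_count f (- i%:Z))%:Z| <= 1 /\
     `|(v_count f i%:Z)%:Z - (v_count f (- i%:Z))%:Z| <= 1).

Definition Hk_cordial (k : nat) : Prop := exists f : E -> int, Hk_cordial_labeling k f.
End Cordial.

(* The wheel W_n: vertices 'I_n.+1, vertex 0 is the hub v_0, vertex j (1<=j<=n) is v_j.
   Edges: inl i (i : 'I_n) is the spoke v_0 v_{i+1};
          inr i (i : 'I_n) is the rim edge v_{i+1} v_{((i+1) mod n)+1}. *)
Definition wheel_ends (n : nat) (e : 'I_n + 'I_n) : 'I_n.+1 * 'I_n.+1 :=
  match e with
  | inl i => (ord0, inord i.+1)
  | inr i => (inord i.+1, inord ((i.+1 %% n).+1))
  end.

Definition wheel_Hk_cordial (n k : nat) : Prop :=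
  Hk_cordial (V := 'I_n.+1) (@wheel_ends n) k.

(* Main.v *)
Require Import Defs.
From mathcomp Require Import all_boot all_order all_algebra.
From mathcomp Require Import zify.
Set Implicit Arguments. Unset Strict Implicit. Unset Printing Implicit Defensive.
Import Order.TTheory GRing.Theory Num.Theory.
Local Open Scope ring_scope.

Definition mm (b : bool) : nat := if b then 3%N else 4%N.

Definition sv (b : bool) (i : nat) : int :=
  if (i < mm b)%N then
    (if b then nth 0 [:: 1; 1; -1] i else nth 0 [:: 1; 1; 1; -1] i)
  else if odd (i - mm b) then -2 else 2.
Definition rv (b : bool) (i : nat) : int :=
  if (i < mm b)%N then
    (if b then nth 0 [:: -1; 1; -1] i else nth 0 [:: -2; -1; 1; -1] i)
  else if odd (i - mm b) then -1 else 1.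

Definition wv (b : bool) (j : nat) : int :=
  if j == 0%N then sv b 0 + rv b 0 - 1
  else if (j < mm b)%N then sv b j + rv b j + rv b j.-1
  else sv b j.

Definition prevn (n j : nat) : nat := if j == 0%N then n.-1 else j.-1.

Definition fw (n : nat) (e : 'I_n + 'I_n) : int :=
  match e with inl i => sv (odd n) i | inr i => rv (odd n) i end.
Arguments fw n e : clear implicits.

Definition dl (c x : int) : int := (x == c)%:Z - (x == - c)%:Z.

Lemma dlN c x : dl c (- x) = - dl c x.
Proof.
by rewrite /dl eqr_opp eqr_oppLR opprB.
Qed.

Lemma card_setZ (T : finType) (P : pred T) :
  (#|[set x | P x]|)%:Z = \sum_x (P x)%:Z.
Proof.
rewrite -sum1_card big_mkcond /=.
rewrite (big_morph Posz PoszD (erefl (Posz 0))); apply: eq_bigr => i _; rewrite inE; by case: (P i).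
Qed.

Lemma sum_periodic (g : nat -> int) m k :
  (forall t, g (m + t.*2)%N + g (m + t.*2).+1 = 0) ->
  \sum_(m <= i < m + k.*2) g i = 0.
Proof.
move=> H; elim: k => [|k IH]; first by rewrite addn0 big_geq.
rewrite doubleS !addnS big_nat_recr /=; last by lia.
rewrite big_nat_recr /=; last by lia.
by rewrite IH add0r H.
Qed.

Lemma succ_mod i n : (i < n)%N -> (i.+1 %% n = if i.+1 == n then 0 else i.+1)%N.
Proof.
move=> h; case: eqP => [->|h']; first by rewrite modnn.
rewrite modn_small //; lia.
Qed.

Lemma vlabel_hub n : vlabel (@wheel_ends n) (fw n) ord0 = \sum_(i < n) sv (odd n) i.
Proof.
rewrite /vlabel big_sumType /=.
rewrite [X in _ + X]big_pred0; last first.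
  move=> i; have hi := ltn_ord i; rewrite /incident /=; apply/negbTE; rewrite negb_or.
  rewrite -!val_eqE /= !inordK ?succ_mod //; try lia.
  case: eqP => h; lia.
rewrite addr0; apply: eq_bigl => i; by rewrite /incident /=.
Qed.

Lemma vlabel_rim n (j : 'I_n) : (2 < n)%N ->
  vlabel (@wheel_ends n) (fw n) (lift ord0 j) =
  sv (odd n) j + rv (odd n) j + rv (odd n) (prevn n j).
Proof.
move=> n2; rewrite /vlabel big_sumType /=.
have e1 : forall i : 'I_n, incident (@wheel_ends n) (lift ord0 j) (inl i) = (i == j).
  move=> i; have hi := ltn_ord i; rewrite /incident /= -!val_eqE /= inordK //.
rewrite (eq_bigl _ _ e1) big_pred1_eq.
have pj : (prevn n j < n)%N by have hj := ltn_ord j; rewrite /prevn; case: ifP; lia.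
have e2 : forall i : 'I_n, incident (@wheel_ends n) (lift ord0 j) (inr i)
   = (i == j) || (i == Ordinal pj).
  move=> i; have hi := ltn_ord i; have hj := ltn_ord j.
  rewrite /incident /= -!val_eqE /= !inordK ?succ_mod //; last first.
    case: eqP => h; lia.
  rewrite /bump /=.
  rewrite /prevn; case: ifP => h1; case: ifP => h2; lia.
rewrite (eq_bigl _ _ e2) (bigD1 j) /=; last by rewrite eqxx.
have e3 : forall i : 'I_n, ((i == j) || (i == Ordinal pj)) && (i != j) = (i == Ordinal pj).
  move=> i; have hi := ltn_ord i; have hj := ltn_ord j.
  rewrite -!val_eqE /= /prevn; case: ifP => h1; lia.
rewrite (eq_bigl _ _ e3) big_pred1_eq /=.
by rewrite addrA.
Qed.

Lemma mm_ge3 b : (3 <= mm b)%N.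
Proof. by case: b. Qed.

Lemma rv_last b k : rv b (mm b + k.*2).-1 = -1.
Proof.
case: k => [|k]; first by case: b.
have h3 := mm_ge3 b.
rewrite /rv.
have -> : ((mm b + k.+1.*2).-1 < mm b)%N = false by lia.
have -> : ((mm b + k.+1.*2).-1 - mm b = (k.*2).+1)%N by lia.
by rewrite /= odd_double.
Qed.

Lemma rv_step b j : (mm b <= j)%N -> rv b j + rv b j.-1 = 0.
Proof.
move=> h; have h3 := mm_ge3 b.
case: (j =P mm b) => [->|hn]; first by clear; case: b.
rewrite /rv.
have -> : (j < mm b)%N = false by lia.
have -> : (j.-1 < mm b)%N = false by lia.
have -> : (j - mm b = (j.-1 - mm b).+1)%N by lia.
by rewrite /=; case: odd.
Qed.

Lemma sv_per b t : sv b (mm b + t.*2) = 2 /\ sv b (mm b + t.*2).+1 = -2.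
Proof.
rewrite /sv.
have -> : (mm b + t.*2 < mm b)%N = false by lia.
have -> : ((mm b + t.*2).+1 < mm b)%N = false by lia.
have -> : ((mm b + t.*2) - mm b = t.*2)%N by lia.
have -> : ((mm b + t.*2).+1 - mm b = (t.*2).+1)%N by lia.
by rewrite /= odd_double.
Qed.

Lemma rv_per b t : rv b (mm b + t.*2) = 1 /\ rv b (mm b + t.*2).+1 = -1.
Proof.
rewrite /rv.
have -> : (mm b + t.*2 < mm b)%N = false by lia.
have -> : ((mm b + t.*2).+1 < mm b)%N = false by lia.
have -> : ((mm b + t.*2) - mm b = t.*2)%N by lia.
have -> : ((mm b + t.*2).+1 - mm b = (t.*2).+1)%N by lia.
by rewrite /= odd_double.
Qed.

Lemma wv_per b t : wv b (mm b + t.*2) = 2 /\ wv b (mm b + t.*2).+1 = -2.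
Proof.
have h3 := mm_ge3 b.
rewrite /wv.
have -> : (mm b + t.*2 < mm b)%N = false by lia.
have -> : ((mm b + t.*2).+1 < mm b)%N = false by lia.
have -> : (mm b + t.*2 == 0)%N = false by lia.
have -> : ((mm b + t.*2).+1 == 0)%N = false by lia.
exact: sv_per.
Qed.

Lemma W_eq b k j : (j < mm b + k.*2)%N ->
  sv b j + rv b j + rv b (prevn (mm b + k.*2) j) = wv b j.
Proof.
move=> hj; rewrite /prevn /wv.
case: (j =P 0%N) => [->|h0]; first by rewrite rv_last.
case: ifP => // hm.
rewrite -addrA rv_step ?addr0 //; lia.
Qed.

Lemma sv_range b i : 1 <= `|sv b i| <= 2.
Proof.
rewrite /sv; case: ifP => h; last by case: odd.
by move: h; case: b; case: i => [|[|[|[|i]]]].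
Qed.

Lemma rv_range b i : 1 <= `|rv b i| <= 2.
Proof.
rewrite /rv; case: ifP => h; last by case: odd.
by move: h; case: b; case: i => [|[|[|[|i]]]].
Qed.

Lemma wv_range b j : 1 <= `|wv b j| <= 2.
Proof.
rewrite /wv; case: ifP => h0; first by case: b.
case: ifP => h; last by apply: sv_range.
by move: h h0; case: b; case: j => [|[|[|[|j]]]].
Qed.

Lemma split_sum (g : nat -> int) b k :
  (forall t, g (mm b + t.*2)%N + g (mm b + t.*2).+1 = 0) ->
  \sum_(i < mm b + k.*2) g i = \sum_(0 <= i < mm b) g i.
Proof.
move=> H; rewrite -(big_mkord (fun _ => true)) (@big_cat_nat _ _ _ (mm b) 0 (mm b + k.*2) _ _ (leq0n _) (leq_addr _ _)) /=.
by rewrite sum_periodic // addr0.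
Qed.

Lemma hub_val b k : \sum_(i < mm b + k.*2) sv b i = if b then 1 else 2.
Proof.
rewrite (@split_sum (sv b)); last by move=> t; case: (sv_per b t) => -> ->.
by case: b; rewrite unlock.
Qed.

Lemma odd_N b k : odd (mm b + k.*2) = b.
Proof. by rewrite oddD odd_double addbF; case: b. Qed.

Lemma dl_pair c (g : nat -> int) b :
  (forall t, g (mm b + t.*2)%N = 2 /\ g (mm b + t.*2).+1 = -2) \/
  (forall t, g (mm b + t.*2)%N = 1 /\ g (mm b + t.*2).+1 = -1) ->
  forall t, dl c (g (mm b + t.*2)%N) + dl c (g (mm b + t.*2).+1) = 0.
Proof.
by case=> H t; case: (H t) => -> ->; rewrite dlN subrr.
Qed.

Lemma ecount_eq b k c :
  (e_count (fw (mm b + k.*2)) c)%:Z - (e_count (fw (mm b + k.*2)) (- c))%:Z =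
  \sum_(0 <= i < mm b) dl c (sv b i) + \sum_(0 <= i < mm b) dl c (rv b i).
Proof.
rewrite /e_count !card_setZ -sumrB big_sumType /=.
rewrite -(@split_sum (fun i => dl c (sv b i)) b k); last first.
  by apply: dl_pair; left; apply: sv_per.
rewrite -(@split_sum (fun i => dl c (rv b i)) b k); last first.
  by apply: dl_pair; right; apply: rv_per.
by rewrite odd_N.
Qed.

Lemma vcount_eq b k c :
  (v_count (@wheel_ends (mm b + k.*2)) (fw (mm b + k.*2)) c)%:Z
   - (v_count (@wheel_ends (mm b + k.*2)) (fw (mm b + k.*2)) (- c))%:Z =
  dl c (if b then 1 else 2) + \sum_(0 <= i < mm b) dl c (wv b i).
Proof.
rewrite /v_count !card_setZ -sumrB big_ord_recl /=.
rewrite vlabel_hub odd_N hub_val.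
congr (_ + _).
rewrite -(@split_sum (fun i => dl c (wv b i)) b k); last first.
  by apply: dl_pair; left; apply: wv_per.
apply: eq_bigr => i _.
have h3 := mm_ge3 b.
rewrite vlabel_rim; last by lia.
by rewrite odd_N W_eq.
Qed.

Theorem theorem6 (n : nat) : (3 <= n)%N -> wheel_Hk_cordial n 2.
Proof.
move=> n3.
have [k [b ->]] : exists k b, n = (mm b + k.*2)%N.
  exists ((n - mm (odd n))./2), (odd n).
  have := odd_double_half (n - mm (odd n)).
  rewrite oddB; last by rewrite /mm; case: ifP => h; lia.
  have -> : odd (mm (odd n)) = odd n by rewrite /mm; case: (odd n).
  rewrite addbb add0n => e.
  have : (mm (odd n) <= n)%N by rewrite /mm; case: ifP => h; lia.
  lia.
exists (fw (mm b + k.*2)); split; [|split].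
- by case=> i /=; rewrite odd_N ?sv_range ?rv_range.
- move=> v; case: (unliftP ord0 v) => [j ->|->].
    have h3 := mm_ge3 b.
    rewrite vlabel_rim; last by lia.
    by rewrite odd_N W_eq ?wv_range.
  by rewrite vlabel_hub odd_N hub_val; clear v; case: b.
- move=> i /andP [i1 i2].
  rewrite ecount_eq vcount_eq.
  have : i = 1%N \/ i = 2%N by lia.
  by case=> ->; case: b; rewrite unlock.
Qed.
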